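(* Let $K\ge 2$ and let $(\mathbf{H},D,\mathbf{Z})$ follow the conditionally symmetric multidimensional Gaussian mixture model (csmGmm) described in the context. Define the local false discovery rate $$lfdr(\mathbf{z})=\Pr(\mathbf{H}\in\mathcal{H}_0\mid \mathbf{Z}=\mathbf{z})=\frac{\sum_{l:\mathbf{h}^l\in\mathcal{H}_0}\sum_{m=1}^{M_{b_l}}\pi_{b_l m}\prod_{k=1}^K\phi(z_k-h^l_k\mu_{b_l,m,k})}{\sum_{l=0}^{3^K-1}\sum_{m=1}^{M_{b_l}}\pi_{b_l m}\prod_{k=1}^K\phi(z_k-h^l_k\mu_{b_l,m,k})},\qquad \mathbf{z}\in\mathbb{R}^K,$$ where $\phi$ is the standard normal density and $\mathcal{H}_0=\{\mathbf{h}\in\{-1,0,1\}^K:\sum_{k=1}^K|h_k|<K\}$. Then for every $k\in\{1,\dots,K\}$, with all coordinates $z_{k'}$, $k'\neq k$, held fixed, $lfdr(\mathbf{z})$ is non-increasing in $z_k$ on $z_k>0$ and non-decreasing in $z_k$ on $z_k<0$. Consequently the csmGmm never produces incongruous results: whenever $\mathbf{z},\mathbf{z}'\in\mathbb{R}^K$ satisfy $\mathrm{sign}(z_k)=\mathrm{sign}(z'_k)$ and $|z_k|\ge|z'_k|$ for all $k$, we have $lfdr(\mathbf{z})\le lfdr(\mathbf{z}')$.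
   Context: Setting: large-scale testing of the composite null $\bigcup_{k=1}^K\{\theta_k=0\}$ for a vector of $K$ parameters using a vector of test statistics $\mathbf{Z}=(Z_1,\dots,Z_K)^T$. The latent association configuration is $\mathbf{H}\in\{-1,0,1\}^K$ ($H_k=0$: $\theta_k=0$; $H_k=\pm1$: $\theta_k$ positive/negative). Enumerate all $3^K$ configurations as $\mathbf{h}^0,\dots,\mathbf{h}^{3^K-1}$ with $\mathbf{h}^0=(0,\dots,0)^T$. The binary representation of $\mathbf{h}^l$ is $b_l=\sum_{k=1}^K 2^{K-k}|h^l_k|\in\{0,\dots,2^K-1\}$; its $k$-th binary digit is $|h^l_k|$. csmGmm: for each $b\in\{0,\dots,2^K-1\}$ there is a positive integer $M_b$ (with $M_0=1$), mean-magnitude vectors $\boldsymbol{\mu}_{b,m}=(\mu_{b,m,1},\dots,\mu_{b,m,K})^T$, $m=1,\dots,M_b$, and probabilities $\pi_{bm}\ge0$. Here $\mu_{b,m,k}=0$ if the $k$-th binary digit of $b$ is $0$ and $\mu_{b,m,k}>0$ otherwise, and $\mu_{2^K-1,m,k}\ge\mu_{b,m',k}$ for all $b<2^K-1$ and all $m,m',k$. The joint law of $(\mathbf{H},D)$ is $\Pr(\mathbf{H}=\mathbf{h}^l,D=m)=\pi_{b_l m}$ for $m=1,\dots,M_{b_l}$ (so configurations with the same binary representation share mixing probabilities), with $\sum_{l=0}^{3^K-1}\sum_{m=1}^{M_{b_l}}\pi_{b_l m}=1$. Conditional on $\mathbf{H}=\mathbf{h}^l$, $D=m$, $\mathbf{Z}\sim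 N_K(\mathrm{diag}(\mathbf{h}^l)\boldsymbol{\mu}_{b_l,m},\mathbf{I}_K)$. *)

(* Defs.v *)
From HB Require Import structures.
From mathcomp Require Import all_boot all_order all_algebra.
From mathcomp Require Import all_classical all_reals all_analysis.
Set Implicit Arguments. Unset Strict Implicit. Unset Printing Implicit Defensive.
Import Order.TTheory GRing.Theory Num.Theory.
Local Open Scope ring_scope.

Definition phi (R : realType) (x : R) : R :=
  (Num.sqrt (2 * pi))^-1 * expR (- (x ^+ 2) / 2).

(* A configuration h in {-1,0,1}^K is encoded as a finite function
   'I_K -> 'I_3, the code c : 'I_3 standing for the integer c - 1. *)
Definition cfg (K : nat) := {ffun 'I_K -> 'I_3}.

Definition hz (c : 'I_3) : int := (nat_of_ord c)%:Z - 1.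

(* Binary representation of h: encoded as the set of indices k with
   |h_k| = 1 (the k-th binary digit of b_l is |h^l_k|).
   set0 plays the role of b = 0, setT the role of b = 2^K - 1. *)
Definition bin (K : nat) (h : cfg K) : {set 'I_K} := [set k | absz (hz (h k)) == 1%N].

Definition inH0 (K : nat) (h : cfg K) : bool :=
  (\sum_(k < K) absz (hz (h k)) < K)%N.

Definition cfg_term (R : realType) (K : nat) (M : {set 'I_K} -> nat)
  (pr : {set 'I_K} -> nat -> R) (mu : {set 'I_K} -> nat -> 'I_K -> R)
  (z : 'I_K -> R) (h : cfg K) : R :=
  \sum_(1 <= m < (M (bin h)).+1)
     pr (bin h) m * \prod_(k < K) phi (z k - (hz (h k))%:~R * mu (bin h) m k).

Definition lfdr (R : realType) (K : nat) (M : {set 'I_K} -> nat)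
  (pr : {set 'I_K} -> nat -> R) (mu : {set 'I_K} -> nat -> 'I_K -> R)
  (z : 'I_K -> R) : R :=
  (\sum_(h : cfg K | inH0 h) cfg_term M pr mu z h) /
  (\sum_(h : cfg K) cfg_term M pr mu z h).

Definition upd (R : Type) (K : nat) (z : 'I_K -> R) (k : 'I_K) (x : R) : 'I_K -> R :=
  fun j => if j == k then x else z j.

Definition csmGmm_params (R : realType) (K : nat) (M : {set 'I_K} -> nat)
  (pr : {set 'I_K} -> nat -> R) (mu : {set 'I_K} -> nat -> 'I_K -> R) : Prop :=
  M (finset.set0 : {set 'I_K}) = 1%N /\
      (forall b, (0 < M b)%N) /\
      (forall b m, (1 <= m <= M b)%N -> 0 <= pr b m) /\
      (forall b m k, (1 <= m <= M b)%N -> k \notin b -> mu b m k = 0) /\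
      (forall b m k, (1 <= m <= M b)%N -> k \in b -> 0 < mu b m k) /\
      (forall b m m' k, b != [set: 'I_K] -> (1 <= m <= M [set: 'I_K])%N -> (1 <= m' <= M b)%N ->
          mu b m' k <= mu [set: 'I_K] m k) /\
    \sum_(h : cfg K) \sum_(1 <= m < (M (bin h)).+1) pr (bin h) m = 1.

(* Main.v *)
Require Import Defs.
From HB Require Import structures.
From mathcomp Require Import all_boot all_order all_algebra.
From mathcomp Require Import all_classical all_reals all_analysis.
From mathcomp Require Import ring lra zify.
Import Order.TTheory GRing.Theory Num.Theory.
Set Implicit Arguments. Unset Strict Implicit. Unset Printing Implicit Defensive.
Local Open Scope ring_scope.

Definition psi (R : realType) (a x : R) : R := phi (x - a) + phi (x + a).
Definition G (R : realType) (s : R) : R := expR s + expR (- s).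
Definition C0 (R : realType) : R := (Num.sqrt (2 * pi))^-1.

Lemma C0_gt0 (R : realType) : 0 < C0 R.
Proof. by rewrite /C0 invr_gt0 sqrtr_gt0 mulr_gt0 // pi_gt0. Qed.

Lemma phi_gt0 (R : realType) (x : R) : 0 < phi x.
Proof. by rewrite /phi mulr_gt0 ?expR_gt0 // -/(C0 R) C0_gt0. Qed.

Lemma phiN (R : realType) (x : R) : phi (- x) = phi x.
Proof. by rewrite /phi sqrrN. Qed.

Lemma phiM (R : realType) (u v q w : R) :
  - (u ^+ 2) / 2 + - (v ^+ 2) / 2 = q + w ->
  phi u * phi v = C0 R ^+ 2 * (expR q * expR w).
Proof.
move=> E; rewrite /phi -/(C0 R) mulrACA -expRD -E expRD; ring.
Qed.

Lemma psi_prod (R : realType) (a b x y : R) :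
  psi a y * psi b x = C0 R ^+ 2 * (expR (- (a^+2 + b^+2 + x^+2 + y^+2) / 2) *
     (G (y * a + x * b) + G (y * a - x * b))).
Proof.
set q := - (a^+2 + b^+2 + x^+2 + y^+2) / 2.
have -> : psi a y * psi b x = phi (y - a) * phi (x - b) + phi (y - a) * phi (x + b)
   + phi (y + a) * phi (x - b) + phi (y + a) * phi (x + b).
  by rewrite /psi; ring.
rewrite (@phiM _ _ _ q (y * a + x * b)); last by rewrite /q; field.
rewrite (@phiM _ _ _ q (y * a - x * b)); last by rewrite /q; field.
rewrite (@phiM _ _ _ q (- (y * a - x * b))); last by rewrite /q; field.
rewrite (@phiM _ _ _ q (- (y * a + x * b))); last by rewrite /q; field.
rewrite /G; ring.
Qed.

Lemma G_norm (R : realType) (s : R) : G s = G `|s|.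
Proof.
have [s0|s0] := leP 0 s; first by rewrite ger0_norm.
by rewrite ltr0_norm // /G opprK addrC.
Qed.

Lemma G_mono0 (R : realType) (s t : R) : 0 <= s -> s <= t -> G s <= G t.
Proof.
move=> s0 st.
have E : G t - G s = (expR t - expR s) * (1 - expR (- s) * expR (- t)).
  rewrite /G mulrBr mulr1 mulrBl -!expRD.
  have -> : t + (- s + - t) = - s by ring.
  have -> : s + (- s + - t) = - t by ring.
  ring.
rewrite -subr_ge0 E mulr_ge0 //.
  by rewrite subr_ge0 ler_expR.
rewrite subr_ge0 -expRD -[X in _ <= X]expR0 ler_expR; lra.
Qed.

Lemma G_mono (R : realType) (s t : R) : `|s| <= `|t| -> G s <= G t.
Proof. by move=> h; rewrite (G_norm s) (G_norm t) G_mono0. Qed.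

Lemma psi_le0 (R : realType) (a b x y : R) : 0 <= a -> a <= b -> 0 <= x -> x <= y ->
  psi a y * psi b x <= psi a x * psi b y.
Proof.
move=> a0 ab x0 xy.
rewrite !psi_prod.
have -> : a ^+ 2 + b ^+ 2 + y ^+ 2 + x ^+ 2 = a ^+ 2 + b ^+ 2 + x ^+ 2 + y ^+ 2 by ring.
apply: ler_wpM2l; first by rewrite exprn_ge0 // ltW // C0_gt0.
apply: ler_wpM2l; first by rewrite ltW // expR_gt0.
apply: lerD; apply: G_mono.
  rewrite !ger0_norm; [nra| nra| nra].
have H1 : 0 <= y * b - x * a by nra.
rewrite [`|x * a - y * b|]distrC (ger0_norm H1) ler_norml; apply/andP; split; nra.
Qed.

Lemma psi_evena (R : realType) (a x : R) : psi (- a) x = psi a x.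
Proof. by rewrite /psi opprK addrC. Qed.

Lemma psi_evenx (R : realType) (a x : R) : psi a (- x) = psi a x.
Proof.
rewrite /psi -opprD phiN addrC.
have -> : - x + a = - (x - a) by ring.
by rewrite phiN.
Qed.

Lemma psi_norm (R : realType) (a x : R) : psi a x = psi `|a| `|x|.
Proof.
have [a0|a0] := leP 0 a; [rewrite (ger0_norm a0) | rewrite (ltr0_norm a0) psi_evena];
have [x0|x0] := leP 0 x; (try by rewrite (ger0_norm x0));
by rewrite (ltr0_norm x0) psi_evenx.
Qed.

Lemma psi_le (R : realType) (a b x y : R) : `|a| <= `|b| -> `|x| <= `|y| ->
  psi a y * psi b x <= psi a x * psi b y.
Proof.
move=> ab xy.
rewrite (psi_norm a y) (psi_norm b x) (psi_norm a x) (psi_norm b y).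
by apply: psi_le0.
Qed.

Definition flip (K : nat) (k : 'I_K) (h : cfg K) : cfg K :=
  [ffun j => if j == k then rev_ord (h j) else h j].

Lemma hz_rev (c : 'I_3) : hz (rev_ord c) = - hz c.
Proof. by case: c => [[|[|[|n]]] Hc] //; rewrite /hz /=. Qed.

Lemma absz_flip K (k : 'I_K) h j : absz (hz (flip k h j)) = absz (hz (h j)).
Proof. by rewrite ffunE; case: eqP => _ //; rewrite hz_rev abszN. Qed.

Lemma bin_flip K (k : 'I_K) h : bin (flip k h) = bin h.
Proof. by apply/setP => j; rewrite !inE absz_flip. Qed.

Lemma inH0_flip K (k : 'I_K) h : inH0 (flip k h) = inH0 h.
Proof. by rewrite /inH0; under eq_bigr do rewrite absz_flip. Qed.

Lemma flipK K (k : 'I_K) : involutive (flip k).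
Proof.
move=> h; apply/ffunP => j; rewrite !ffunE.
by case: eqP => // _; rewrite rev_ordK.
Qed.

Lemma hz_le1 (c : 'I_3) : (absz (hz c) <= 1)%N.
Proof. by case: c => [[|[|[|n]]] Hc]. Qed.

Lemma hzR_le1 (R : realType) (c : 'I_3) : `|(hz c)%:~R : R| <= 1.
Proof. by case: c => [[|[|[|n]]] Hc] //; rewrite /hz /= ?normrN ?normr1 ?normr0. Qed.

Lemma hzR_eq1 (R : realType) (c : 'I_3) : absz (hz c) = 1%N -> `|(hz c)%:~R : R| = 1.
Proof. by case: c => [[|[|[|n]]] Hc] //; rewrite /hz /= ?normrN ?normr1 ?normr0. Qed.

Lemma H0_bin K (h : cfg K) : inH0 h -> bin h != [set: 'I_K].
Proof.
rewrite /inH0; apply: contraTN => /eqP hT.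
have E : \sum_(k < K) absz (hz (h k)) = \sum_(k < K) 1%N.
  apply: eq_bigr => j _; have : j \in bin h by rewrite hT inE.
  by rewrite inE => /eqP.
by rewrite E sum_nat_const card_ord muln1 ltnn.
Qed.

Lemma notH0_bin K (h : cfg K) : ~~ inH0 h -> bin h = [set: 'I_K].
Proof.
rewrite /inH0 -leqNgt => HK.
have E : \sum_(k < K) absz (hz (h k)) + \sum_(k < K) (1 - absz (hz (h k)))%N = K.
  rewrite -big_split /=.
  rewrite (eq_bigr (fun _ => 1%N)) => [|j _]; last by have := hz_le1 (h j); lia.
  by rewrite sum_nat_const card_ord muln1.
have E0 : \sum_(k < K) (1 - absz (hz (h k)))%N == 0%N.
  move: E HK; set s1 := bigop _ _ _; set s2 := bigop _ _ _ => E HK.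
  apply/eqP; lia.
move: E0; rewrite sum_nat_eq0 => /forallP H.
apply/setP => j; rewrite !inE; move: (H j) => /=.
by have := hz_le1 (h j); lia.
Qed.

Definition cc (R : realType) K (pr : {set 'I_K} -> nat -> R)
  (mu : {set 'I_K} -> nat -> 'I_K -> R) (k : 'I_K) (z : 'I_K -> R) (h : cfg K) (m : nat) : R :=
  pr (bin h) m * \prod_(j < K | j != k) phi (z j - (hz (h j))%:~R * mu (bin h) m j).

Definition ss (R : realType) K (mu : {set 'I_K} -> nat -> 'I_K -> R) (k : 'I_K) (h : cfg K) (m : nat) : R :=
  (hz (h k))%:~R * mu (bin h) m k.

Lemma term_upd (R : realType) K M (pr : {set 'I_K} -> nat -> R) mu k z (x : R) h :
  cfg_term M pr mu (upd z k x) h =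
  \sum_(1 <= m < (M (bin h)).+1) cc pr mu k z h m * phi (x - ss mu k h m).
Proof.
rewrite /cfg_term; apply: eq_bigr => m _.
rewrite (bigD1 k) //= {1}/upd eqxx /cc /ss.
rewrite (eq_bigr (fun j => phi (z j - (hz (h j))%:~R * mu (bin h) m j))) => [|j /negbTE jk];
  last by rewrite /upd jk.
ring.
Qed.

Lemma cc_flip (R : realType) K (pr : {set 'I_K} -> nat -> R) mu k z h m :
  cc pr mu k z (flip k h) m = cc pr mu k z h m.
Proof.
rewrite /cc bin_flip; congr (_ * _); apply: eq_bigr => j /negbTE jk.
by rewrite ffunE jk.
Qed.

Lemma ss_flip (R : realType) K (mu : {set 'I_K} -> nat -> 'I_K -> R) k h m :
  ss mu k (flip k h) m = - ss mu k h m.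
Proof. by rewrite /ss bin_flip ffunE eqxx hz_rev intrN mulNr. Qed.

Lemma sym (R : realType) K M (pr : {set 'I_K} -> nat -> R) mu k z (x : R) (P : pred (cfg K)) :
  (forall h, P (flip k h) = P h) ->
  2 * \sum_(h | P h) cfg_term M pr mu (upd z k x) h =
  \sum_(h | P h) \sum_(1 <= m < (M (bin h)).+1) cc pr mu k z h m * psi (ss mu k h m) x.
Proof.
move=> HP.
have E : \sum_(h | P h) cfg_term M pr mu (upd z k x) h =
         \sum_(h | P h) cfg_term M pr mu (upd z k x) (flip k h).
  by rewrite (reindex_inj (can_inj (flipK k))); apply: eq_bigl => h; exact: HP.
set S := \sum_(h | P h) cfg_term M pr mu (upd z k x) h.
have -> : 2 * S = S + S by ring.
rewrite {2}/S E /S -big_split /=; apply: eq_bigr => h _.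
rewrite !term_upd bin_flip -big_split /=; apply: eq_bigr => m _.
by rewrite cc_flip ss_flip /psi opprK mulrDr.
Qed.

Lemma sum_pos (R : realType) (I : eqType) (r : seq I) (F : I -> R) i :
  uniq r -> i \in r -> (forall j, j \in r -> 0 <= F j) -> 0 < F i ->
  0 < \sum_(j <- r) F j.
Proof.
move=> ur ir H Fi; rewrite (bigD1_seq i) //=.
have : 0 <= \sum_(j <- r | j != i) F j.
  by rewrite big_seq_cond; apply: sumr_ge0 => j /andP[jr _]; exact: H.
lra.
Qed.

Lemma algebra_final (R : realType) (n a n' a' : R) :
  0 <= n -> 0 <= a -> 0 <= n' -> 0 <= a' -> 0 < n + a -> 0 < n' + a' ->
  n' * a <= n * a' -> n' / (n' + a') <= n / (n + a).
Proof.
move=> *; rewrite ler_pdivrMr // mulrAC ler_pdivlMr //; nra.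
Qed.

Lemma core (R : realType) (K : nat) (M : {set 'I_K} -> nat)
  (pr : {set 'I_K} -> nat -> R) (mu : {set 'I_K} -> nat -> 'I_K -> R) :
  csmGmm_params M pr mu ->
  forall (k : 'I_K) (z : 'I_K -> R) (x y : R), `|x| <= `|y| ->
    lfdr M pr mu (upd z k y) <= lfdr M pr mu (upd z k x).
Proof.
move=> [HM0 [HMpos [Hpr [Hmu0 [Hmupos [Hmule Hsum]]]]]] k z x y xy.
have term_ge0 : forall w h, 0 <= cfg_term M pr mu w h.
  move=> w h; rewrite /cfg_term big_nat_cond; apply: sumr_ge0 => m /andP[Hm _].
  rewrite ltnS in Hm.
  apply: mulr_ge0; first exact: Hpr.
  by apply: prodr_ge0 => j _; exact/ltW/phi_gt0.
have cc_ge0 : forall h m, (1 <= m <= M (bin h))%N -> 0 <= cc pr mu k z h m.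
  move=> h m Hm; apply: mulr_ge0; first exact: Hpr.
  by apply: prodr_ge0 => j _; exact/ltW/phi_gt0.
have [h0 [m0 [Hm0 Hp0]]] : exists h m, (1 <= m <= M (bin h))%N /\ pr (bin h) m != 0.
  apply: contrapT => Hno; move: Hsum; rewrite big1 => [/eqP|h _].
    by rewrite eq_sym oner_eq0.
  rewrite big_nat_cond big1 // => m /andP[Hm _]; rewrite ltnS in Hm.
  apply/eqP; apply: contrapT => Hne; apply: Hno; exists h, m; split => //.
  exact/negP.
have D_gt0 : forall w, 0 < \sum_(h : cfg K) cfg_term M pr mu w h.
  move=> w; apply: (@sum_pos _ _ _ _ h0).
  - exact: index_enum_uniq.
  - exact: mem_index_enum.
  - by move=> j _; exact: term_ge0.
  apply: (@sum_pos _ _ _ _ m0).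
  - exact: iota_uniq.
  - by rewrite mem_index_iota ltnS.
  - move=> m; rewrite mem_index_iota ltnS => Hm; apply: mulr_ge0; first exact: Hpr.
    by apply: prodr_ge0 => j _; exact/ltW/phi_gt0.
  apply: mulr_gt0; first by rewrite lt_def Hp0 Hpr.
  by apply: prodr_gt0 => j _; exact: phi_gt0.
set n := fun w => \sum_(h | inH0 h) cfg_term M pr mu (upd z k w) h.
set a := fun w => \sum_(h | ~~ inH0 h) cfg_term M pr mu (upd z k w) h.
have sumE : forall w, \sum_(h : cfg K) cfg_term M pr mu (upd z k w) h = n w + a w.
  by move=> w; rewrite (bigID (@inH0 K)) /=.
have lfdrE : forall w, lfdr M pr mu (upd z k w) = n w / (n w + a w).
  by move=> w; rewrite /lfdr sumE.
have n_ge0 : forall w, 0 <= n w by move=> w; apply: sumr_ge0 => h _; exact: term_ge0.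
have a_ge0 : forall w, 0 <= a w by move=> w; apply: sumr_ge0 => h _; exact: term_ge0.
have na_gt0 : forall w, 0 < n w + a w.
  by move=> w; rewrite -sumE; exact: D_gt0.
have nE : forall w, 2 * n w = \sum_(h | inH0 h) \sum_(1 <= m < (M (bin h)).+1)
      cc pr mu k z h m * psi (ss mu k h m) w.
  by move=> w; apply: sym => h; rewrite inH0_flip.
have aE : forall w, 2 * a w = \sum_(h | ~~ inH0 h) \sum_(1 <= m < (M (bin h)).+1)
      cc pr mu k z h m * psi (ss mu k h m) w.
  by move=> w; apply: sym => h; rewrite inH0_flip.
have key : (2 * n y) * (2 * a x) <= (2 * n x) * (2 * a y).
  rewrite !nE !aE.
  rewrite mulr_suml [X in _ <= X]mulr_suml; apply: ler_sum => h Hh.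
  rewrite mulr_suml [X in _ <= X]mulr_suml big_nat_cond [X in _ <= X]big_nat_cond.
  apply: ler_sum => m /andP[Hm _]; rewrite ltnS in Hm.
  rewrite mulr_sumr [X in _ <= X]mulr_sumr; apply: ler_sum => h' Hh'.
  rewrite mulr_sumr [X in _ <= X]mulr_sumr big_nat_cond [X in _ <= X]big_nat_cond.
  apply: ler_sum => m' /andP[Hm' _]; rewrite ltnS in Hm'.
  rewrite mulrACA [X in _ <= X]mulrACA.
  apply: ler_wpM2l; first by apply: mulr_ge0; apply: cc_ge0.
  apply: psi_le => //.
  have hT := notH0_bin Hh'.
  have hN := H0_bin Hh.
  rewrite hT in Hm'.
  rewrite /ss hT !normrM.
  have -> : `|(hz (h' k))%:~R : R| = 1.
    apply: hzR_eq1; have : k \in bin h' by rewrite hT inE.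
    by rewrite inE => /eqP.
  have mu0 : 0 <= mu (bin h) m k.
    case: (boolP (k \in bin h)) => kb.
      exact/ltW/Hmupos.
    by rewrite Hmu0.
  have mule := Hmule (bin h) m' m k hN Hm' Hm.
  rewrite mul1r (ger0_norm mu0) (ger0_norm (le_trans mu0 mule)).
  rewrite -[X in _ <= X]mul1r; apply: ler_pM => //; exact: hzR_le1.
rewrite !lfdrE; apply: algebra_final => //; nra.
Qed.

Theorem theorem1 (R : realType) (K : nat) (M : {set 'I_K} -> nat)
  (pr : {set 'I_K} -> nat -> R) (mu : {set 'I_K} -> nat -> 'I_K -> R) :
  (2 <= K)%N ->
  csmGmm_params M pr mu ->
  [/\ (forall (k : 'I_K) (z : 'I_K -> R) (x y : R), 0 < x -> x <= y ->
         lfdr M pr mu (upd z k y) <= lfdr M pr mu (upd z k x)),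
      (forall (k : 'I_K) (z : 'I_K -> R) (x y : R), x <= y -> y < 0 ->
         lfdr M pr mu (upd z k x) <= lfdr M pr mu (upd z k y))
    & (forall z z' : 'I_K -> R,
         (forall k, Num.sg (z k) = Num.sg (z' k) /\ `|z' k| <= `|z k|) ->
         lfdr M pr mu z <= lfdr M pr mu z')].
Proof.
move=> _ Hp; split.
- move=> k z x y x0 xy; apply: core => //.
  by rewrite !ger0_norm //; lra.
- move=> k z x y xy y0; apply: core => //.
  by rewrite !ltr0_norm //; lra.
move=> z z' H.
set w := fun j (i : 'I_K) => if (i < j)%N then z i else z' i.
have step : forall j, (j <= K)%N -> lfdr M pr mu (w j) <= lfdr M pr mu z'.
  elim => [_|j IH jK].
    have -> : w 0%N = z' by apply: funext => i.
    by [].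
  have jK' : (j < K)%N by [].
  set kj : 'I_K := Ordinal jK'.
  have E1 : w j.+1 = upd (w j) kj (z kj).
    apply: funext => i; rewrite /w /upd.
    case: eqP => [->|/eqP ne]; first by rewrite /= ltnSn.
    rewrite ltnS leq_eqVlt.
    suff -> : (nat_of_ord i == j) = false by [].
    apply/negbTE; apply: contra ne => /eqP ei; apply/eqP/val_inj => /=; exact: ei.
  have E2 : w j = upd (w j) kj (z' kj).
    apply: funext => i; rewrite /w /upd.
    by case: eqP => [->|//]; rewrite /= ltnn.
  apply: le_trans (IH (ltnW jK)).
  rewrite E1 [X in _ <= lfdr _ _ _ X]E2.
  by apply: core => //; case: (H kj).
have -> : z = w K by apply: funext => i; rewrite /w ltn_ord.
exact: step.
Qed.
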